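(* Let $K$ be a Noetherian unital commutative ring, let $A$ be a (not necessarily unital) commutative $K$-algebra such that $A\rtimes K$ is a finitely generated unital $K$-algebra, and let $s\in K$. Then the level morphism of pro-sets $$A^{(s^\infty)}\to\varprojlim\nolimits_n^{\mathrm{Pro}(\mathbf{Set})}s^nA,\qquad a\in A^{(s^n)}\mapsto s^na,$$ is an isomorphism in $\mathrm{Pro}(\mathbf{Set})$, where the right-hand side is the inverse system of ideals $\cdots\subseteq s^2A\subseteq sA\subseteq A$ with inclusions as transition maps. Moreover, the morphism of pro-sets $\varprojlim_n s^nA\to A_s$, $s^na\mapsto \frac{s^na}{1}$, into the constant pro-set $A_s$ (the localization) is a monomorphism in $\mathrm{Pro}(\mathbf{Set})$.
   Context: $A\rtimes K$ denotes $A\oplus K$ with product $(a,k)(a',k')=(aa'+ak'+a'k,kk')$. For $t\in K$ the homotope $A^{(t)}$ is the set $A$ with the product $a*b=tab$. The colocalization $A^{(s^\infty)}$ is the pro-object (inverse system) $\cdots\to A^{(s^2)}\to A^{(s)}\to A$ in $\mathrm{Pro}(\mathbf{Set})$ with transition maps $A^{(s^{n+1})}\to A^{(s^n)}$, $a\mapsto sa$. For a category $\mathbf C$, $\mathrm{Pro}(\mathbf C)$ has as objects contravariant functors $X\colon\mathbf I_X\to\mathbf C$ from small filtered categories, with $\mathrm{Hom}(X,Y)=\varprojlim_{j\in\mathbf I_Y}\varinjlim_{i\in\mathbf I_X}\mathbf C(X(i),Y(j))$; a level morphism is one given by compatible maps between the terms of inverse systems with the same index category. *)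

(* Defs.v *)
From HB Require Import structures.
From mathcomp Require Import all_boot all_order all_algebra.
From mathcomp Require Import zify.
From Stdlib Require Import ProofIrrelevance.

Set Implicit Arguments.
Unset Strict Implicit.
Unset Printing Implicit Defensive.

Import Order.TTheory GRing.Theory.
Local Open Scope ring_scope.

Definition is_ideal (K : comPzRingType) (I : K -> Prop) : Prop :=
  [/\ I 0, (forall x y, I x -> I y -> I (x + y)) & (forall r x, I x -> I (r * x))].

Definition noetherian (K : comPzRingType) : Prop :=
  forall I : nat -> K -> Prop,
    (forall n, is_ideal (I n)) ->
    (forall n x, I n x -> I n.+1 x) ->
    exists N, forall n x, (N <= n)%N -> I n x -> I N x.

Definition nucomalg (K : comPzRingType) (A : lmodType K) (mul : A -> A -> A) : Prop :=
  [/\ (forall a b c, mul a (mul b c) = mul (mul a b) c),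
      (forall a b, mul a b = mul b a),
      (forall a b c, mul (a + b) c = mul a c + mul b c)
    & (forall (k : K) a b, mul (k *: a) b = k *: mul a b)].

Section Unitization.
Variables (K : comPzRingType) (A : lmodType K) (mul : A -> A -> A).

Definition sd_add (x y : A * K) : A * K := (x.1 + y.1, x.2 + y.2).
Definition sd_scale (r : K) (x : A * K) : A * K := (r *: x.1, r * x.2).
Definition sd_mul (x y : A * K) : A * K :=
  (mul x.1 y.1 + y.2 *: x.1 + x.2 *: y.1, x.2 * y.2).
Definition sd_one : A * K := (0, 1).

Definition fg_unitization : Prop :=
  exists gens : seq (A * K),
    forall x : A * K, forall S : A * K -> Prop,
      S sd_one ->
      (forall g, g \in gens -> S g) ->
      (forall y z, S y -> S z -> S (sd_add y z)) ->
      (forall r y, S y -> S (sd_scale r y)) ->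
      (forall y z, S y -> S z -> S (sd_mul y z)) ->
      S x.
End Unitization.

Record cat := Cat {
  cobj :> Type;
  chom : cobj -> cobj -> Type;
  cid : forall i, chom i i;
  ccomp : forall i j k, chom j k -> chom i j -> chom i k;
  ccomp_id_l : forall i j (u : chom i j), ccomp (cid j) u = u;
  ccomp_id_r : forall i j (u : chom i j), ccomp u (cid i) = u;
  ccomp_assoc : forall i j k l (u : chom i j) (v : chom j k) (w : chom k l),
      ccomp w (ccomp v u) = ccomp (ccomp w v) u
}.

Definition filtered (C : cat) : Prop :=
  [/\ inhabited C,
      (forall i j : C, exists k : C, inhabited (chom i k) /\ inhabited (chom j k))
    & (forall (i j : C) (u v : chom i j), exists (k : C) (w : chom j k),
          ccomp w u = ccomp w v)].

Record proset := ProSet {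
  pidx : cat;
  pidx_filtered : filtered pidx;
  pobj : pidx -> Type;
  pmap : forall i j : pidx, chom i j -> pobj j -> pobj i;
  pmap_id : forall i x, pmap (cid i) x = x;
  pmap_comp : forall (i j k : pidx) (u : chom i j) (v : chom j k) x,
      pmap (ccomp v u) x = pmap u (pmap v x)
}.

(* representatives of elements of colim_i Set(X i, Y j) *)
Definition prorep (X Y : proset) (j : pidx Y) : Type :=
  {i : pidx X & @pobj X i -> @pobj Y j}.
Arguments prorep : clear implicits.

(* the equality of the filtered colimit colim_i Set(X i, Y j) *)
Definition prorep_eq (X Y : proset) (j : pidx Y) (f g : prorep X Y j) : Prop :=
  exists (k : pidx X) (u : chom (projT1 f) k) (v : chom (projT1 g) k),
    forall x, projT2 f (@pmap X _ _ u x) = projT2 g (@pmap X _ _ v x).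

Definition prorawhom (X Y : proset) : Type := forall j : pidx Y, prorep X Y j.
Arguments prorawhom : clear implicits.

(* the family defines an element of lim_j colim_i Set(X i, Y j) *)
Definition is_prohom (X Y : proset) (f : prorawhom X Y) : Prop :=
  forall (j j' : pidx Y) (v : chom j j'),
    prorep_eq (existT (fun i => @pobj X i -> @pobj Y j)
                      (projT1 (f j')) (fun x => @pmap Y _ _ v (projT2 (f j') x)))
              (f j).

Definition prohom_eq (X Y : proset) (f g : prorawhom X Y) : Prop :=
  forall j, prorep_eq (f j) (g j).

Definition proid (X : proset) : prorawhom X X :=
  fun j => existT (fun i => @pobj X i -> @pobj X j) j (fun x => x).
Arguments proid : clear implicits.

Definition procomp (X Y Z : proset) (g : prorawhom Y Z) (f : prorawhom X Y)
  : prorawhom X Z :=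
  fun k => existT (fun i => @pobj X i -> @pobj Z k)
                  (projT1 (f (projT1 (g k))))
                  (fun x => projT2 (g k) (projT2 (f (projT1 (g k))) x)).

Definition pro_iso (X Y : proset) (f : prorawhom X Y) : Prop :=
  is_prohom f /\
  exists g : prorawhom Y X,
    [/\ is_prohom g, prohom_eq (procomp g f) (proid X)
      & prohom_eq (procomp f g) (proid Y)].

Definition pro_mono (X Y : proset) (f : prorawhom X Y) : Prop :=
  is_prohom f /\
  forall (Z : proset) (g1 g2 : prorawhom Z X),
    is_prohom g1 -> is_prohom g2 ->
    prohom_eq (procomp f g1) (procomp f g2) -> prohom_eq g1 g2.

Definition natcat : cat.
Proof.
refine (@Cat nat (fun i j => is_true (i <= j)%N) (fun i => leqnn i)
          (fun i j k v u => leq_trans u v) _ _ _);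
  by move=> *; apply: bool_irrelevance.
Defined.

Lemma natcat_filtered : filtered natcat.
Proof.
split.
- exact: inhabits 0%N.
- move=> i j; exists (maxn i j); split; apply: inhabits => /=.
  + exact: leq_maxl.
  + exact: leq_maxr.
- move=> i j u v; exists j; exists (leqnn j); exact: bool_irrelevance.
Qed.

Definition unitcat : cat.
Proof.
refine (@Cat unit (fun _ _ => unit) (fun _ => tt) (fun _ _ _ _ _ => tt) _ _ _).
  - by move=> i j [].
  - by move=> i j [].
  - by [].
Defined.

Lemma unitcat_filtered : filtered unitcat.
Proof.
split.
- exact: inhabits tt.
- by move=> i j; exists tt; split; apply: inhabits.
- by move=> i j [] []; exists tt; exists tt.
Qed.

Definition const_proset (S : Type) : proset :=
  @ProSet unitcat unitcat_filtered (fun _ => S) (fun _ _ _ x => x)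
          (fun _ _ => erefl) (fun _ _ _ _ _ _ => erefl).

Section Towers.
Variables (K : comPzRingType) (A : lmodType K) (s : K).

(* The colocalization A^(s^oo) : ... -> A^(s^2) -> A^(s) -> A, as a pro-set;
   the underlying set of the homotope A^(s^n) is A, and the transition map
   A^(s^j) -> A^(s^i) (i <= j) is a |-> s^(j-i) a. *)
Definition coloc_map (i j : natcat) (h : chom i j) (a : A) : A :=
  s ^+ (j - i) *: a.

Lemma coloc_map_id (i : natcat) (a : A) : coloc_map (cid i) a = a.
Proof. by rewrite /coloc_map subnn expr0 scale1r. Qed.

Lemma coloc_map_comp (i j k : natcat) (u : chom i j) (v : chom j k) (a : A) :
  coloc_map (ccomp v u) a = coloc_map u (coloc_map v a).
Proof.
rewrite /coloc_map scalerA -exprD.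
have hu : (i <= j)%N := u. have hv : (j <= k)%N := v.
by have -> : (k - i = (j - i) + (k - j))%N by lia.
Qed.

Definition coloc_proset : proset :=
  @ProSet natcat natcat_filtered (fun _ => A) coloc_map
          coloc_map_id coloc_map_comp.

Definition sA (n : nat) : Type := {a : A | exists b : A, a = s ^+ n *: b}.

Lemma sA_incl_proof (i j : nat) (h : (i <= j)%N) (a : A) :
  (exists b : A, a = s ^+ j *: b) -> exists b : A, a = s ^+ i *: b.
Proof.
case=> b ->; exists (s ^+ (j - i) *: b).
rewrite scalerA -exprD.
by have -> : (i + (j - i) = j)%N by lia.
Qed.

Definition sA_incl (i j : natcat) (h : chom i j) (x : sA j) : sA i :=
  exist _ (proj1_sig x) (sA_incl_proof h (proj2_sig x)).

Lemma sA_incl_id (i : natcat) (x : sA i) : sA_incl (cid i) x = x.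
Proof.
case: x => a p; rewrite /sA_incl /=; congr exist; exact: proof_irrelevance.
Qed.

Lemma sA_incl_comp (i j k : natcat) (u : chom i j) (v : chom j k) (x : sA k) :
  sA_incl (ccomp v u) x = sA_incl u (sA_incl v x).
Proof.
case: x => a p; rewrite /sA_incl /=; congr exist; exact: proof_irrelevance.
Qed.

Definition ideal_proset : proset :=
  @ProSet natcat natcat_filtered sA sA_incl sA_incl_id sA_incl_comp.

(* The localization A_s = s^{-1} A as a set: classes of pairs (a, n),
   representing a / s^n, where (a,n) ~ (b,m) iff s^k (s^m a - s^n b) = 0
   for some k. *)
Definition locrel (x y : A * nat) : Prop :=
  exists k : nat, s ^+ k *: (s ^+ y.2 *: x.1 - s ^+ x.2 *: y.1) = 0.

Definition loc : Type := {P : A * nat -> Prop | exists x, P = locrel x}.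

Definition loc_cls (x : A * nat) : loc :=
  exist (fun P => exists y, P = locrel y) (locrel x) (ex_intro _ x erefl).

Definition to_loc (a : A) : loc := loc_cls (a, 0%N).

Definition coloc_to_ideal : prorawhom coloc_proset ideal_proset :=
  fun j : natcat =>
    existT (fun i : natcat => A -> sA j) j
           (fun a => exist (fun x => exists b : A, x = s ^+ j *: b)
                           (s ^+ j *: a) (ex_intro _ a erefl)).

Definition ideal_to_loc : prorawhom ideal_proset (const_proset loc) :=
  fun _ => existT (fun i : natcat => sA i -> loc) 0%N
                  (fun x => to_loc (proj1_sig x)).
End Towers.

(* Main.v *)
Require Import Defs.
From HB Require Import structures.
From mathcomp Require Import all_boot all_order all_algebra.
From mathcomp Require Import zify.
From Stdlib Require Import ClassicalEpsilon ProofIrrelevance.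
Set Implicit Arguments.
Unset Strict Implicit.
Import GRing.Theory.
Local Open Scope ring_scope.

Section Hilbert.
Variable R : comNzRingType.

Definition LC (d : nat) (I : {poly R} -> Prop) (r : R) : Prop :=
  exists p, [/\ I p, (size p <= d.+1)%N & p`_d = r].

Lemma LC_ideal d I : is_ideal I -> is_ideal (LC d I).
Proof.
case=> I0 ID IM; split.
- by exists 0; rewrite size_poly0 coef0.
- move=> x y [p [Ip sp <-]] [q [Iq sq <-]]; exists (p + q); split => //.
  + exact: ID.
  + by rewrite (leq_trans (size_polyD _ _)) // geq_max sp sq.
  + by rewrite coefD.
- move=> r x [p [Ip sp <-]]; exists (r%:P * p); split.
  + exact: IM.
  + by rewrite mul_polyC (leq_trans (size_scale_leq _ _)).
  + by rewrite coefCM.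
Qed.

Lemma LC_mono d I : is_ideal I -> forall r, LC d I r -> LC d.+1 I r.
Proof.
case=> I0 ID IM r [p [Ip sp <-]]; exists ('X * p); split.
- exact: IM.
- apply/leq_sizeP => j hj; rewrite coefXM.
  case: eqP => [E|_]; first by rewrite E in hj.
  by move/leq_sizeP: sp; apply; lia.
- by rewrite coefXM.
Qed.

Lemma LC_monos d d' I : is_ideal I -> (d <= d')%N -> forall r, LC d I r -> LC d' I r.
Proof.
move=> hI; elim: d' => [|d' IH]; first by rewrite leqn0 => /eqP ->.
rewrite leq_eqVlt => /orP [/eqP -> //|h] r /(IH h); exact: LC_mono.
Qed.

Lemma ideal_sub (I : {poly R} -> Prop) p q : is_ideal I -> I p -> I q -> I (p - q).
Proof.
case=> I0 ID IM Ip Iq; apply: ID => //.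
by rewrite -mulN1r; apply: IM.
Qed.

Lemma LC_key (I J : {poly R} -> Prop) : is_ideal I -> is_ideal J ->
  (forall p, I p -> J p) -> (forall d r, LC d J r -> LC d I r) ->
  forall p, J p -> I p.
Proof.
move=> hI hJ IJ LJI p; move: {2}(size p) (leqnn (size p)) => n.
elim: n p => [|n IH] p sp Jp.
  by move: sp; rewrite leqn0 size_poly_eq0 => /eqP ->; case: hI.
have [/eqP p0|pn0] := boolP (p == 0); first by rewrite p0; case: hI.
have sz : size p = (size p).-1.+1 by rewrite prednK // size_poly_gt0.
have [q [Iq sq eq]] : LC (size p).-1 I (p`_(size p).-1).
  by apply: LJI; exists p; split => //; rewrite -sz.
have -> : p = (p - q) + q by rewrite subrK.
case: hI => I0 ID IM; apply: ID => //; apply: IH.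
- apply/leq_sizeP => j hj; rewrite coefB.
  have [->|hj'] := eqVneq j (size p).-1; first by rewrite eq subrr.
  have h1 : (size p <= j)%N by lia.
  move/leq_sizeP: (leqnn (size p)) => /(_ j h1) ->.
  by move/leq_sizeP: sq => /(_ j); rewrite -sz => ->; rewrite ?subrr.
- by apply: ideal_sub => //; apply: IJ.
Qed.

Lemma chain_mono (K : comPzRingType) (I : nat -> K -> Prop) :
  (forall n x, I n x -> I n.+1 x) -> forall m n x, (m <= n)%N -> I m x -> I n x.
Proof.
move=> h m; elim=> [|n IH] x; first by rewrite leqn0 => /eqP ->.
by rewrite leq_eqVlt => /orP [/eqP ->//|hm] /(IH _ hm) /h.
Qed.

Lemma hilbert : noetherian R -> noetherian {poly R}.
Proof.
move=> nR I hI hmon.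
have hmono := @chain_mono _ I hmon.
have LCmon : forall d m n r, (m <= n)%N -> LC d (I m) r -> LC d (I n) r.
  by move=> d m n r mn [p [Ip sp <-]]; exists p; split => //; exact: hmono Ip.
have Nd : forall d, exists N, forall n r, (N <= n)%N -> LC d (I n) r -> LC d (I N) r.
  move=> d; apply: nR.
  - by move=> n; apply: LC_ideal.
  - by move=> n r; apply: LCmon.
pose U d r := exists n, LC d (I n) r.
have [D hD] : exists D, forall d r, (D <= d)%N -> U d r -> U D r.
  apply: nR.
  - move=> d; split.
    + by exists 0%N; case: (LC_ideal d (hI 0%N)).
    + move=> x y [m hx] [n hy]; exists (maxn m n).
      case: (LC_ideal d (hI (maxn m n))) => _ D _; apply: D.
      * by apply: LCmon hx; apply: leq_maxl.
      * by apply: LCmon hy; apply: leq_maxr.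
    + move=> r x [n hx]; exists n; by case: (LC_ideal d (hI n)) => _ _ M; apply: M.
  - by move=> d r [n h]; exists n; apply: LC_mono.
have [ND hND] := Nd D.
have UD : forall r, U D r -> LC D (I ND) r.
  move=> r [n h]; case: (leqP ND n) => hn; first exact: hND h.
  by apply: LCmon h; apply: ltnW.
have [N' hN'] : exists N', forall d n r, (d < D)%N -> (N' <= n)%N ->
    LC d (I n) r -> LC d (I N') r.
  elim: D {hD hND UD ND} => [|D [N' IH]]; first by exists 0%N.
  have [M hM] := Nd D; exists (maxn N' M) => d n r hd hn h.
  rewrite ltnS leq_eqVlt in hd; case/orP: hd => [/eqP Ed|hd]; first subst d.
  + apply: (LCmon D M); first exact: leq_maxr.
    by apply: hM h; lia.
  + by apply: LCmon (IH d n r hd _ h); [apply: leq_maxl| lia].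
exists (maxn ND N') => n p hn Ip.
apply: (LC_key (hI _) (hI n)).
- by move=> q; apply: hmono.
- move=> d r h; case: (leqP D d) => hd.
  + apply: (LCmon d ND); first exact: leq_maxl.
    apply: (LC_monos (hI ND) hd); apply: UD; apply: hD hd _.
    by exists n.
  + apply: (LCmon d N'); first exact: leq_maxr.
    by apply: hN' h => //; lia.
- exact: Ip.
Qed.
End Hilbert.
Section Unit.
Variables (K : comNzRingType) (A : lmodType K) (mul : A -> A -> A).
Hypothesis Hm : nucomalg mul.

Lemma mA a b c : mul a (mul b c) = mul (mul a b) c. Proof. by case: Hm. Qed.
Lemma mC a b : mul a b = mul b a. Proof. by case: Hm. Qed.
Lemma mDl a b c : mul (a + b) c = mul a c + mul b c. Proof. by case: Hm. Qed.
Lemma mZl k a b : mul (k *: a) b = k *: mul a b. Proof. by case: Hm. Qed.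
Lemma mDr a b c : mul c (a + b) = mul c a + mul c b. Proof. by rewrite !(mC c) mDl. Qed.
Lemma mZr k a b : mul b (k *: a) = k *: mul b a. Proof. by rewrite !(mC b) mZl. Qed.
Lemma m0l a : mul 0 a = 0.
Proof. by have := mZl 0 0 a; rewrite !scale0r. Qed.
Lemma m0r a : mul a 0 = 0. Proof. by rewrite mC m0l. Qed.

Definition B : Type := (A * K)%type.
HB.instance Definition _ := GRing.Zmodule.on B.
Definition Bmul (x y : B) : B := sd_mul mul x y.
Definition Bone : B := @sd_one K A.

Lemma BmulA : associative Bmul.
Proof.
move=> [a k] [b l] [c m]; rewrite /Bmul /sd_mul /=; congr pair; last by rewrite mulrA.
rewrite !mDl !mDr !mZl !mZr !scalerDr !scalerA !mA.
rewrite (mulrC m l) (mulrC m k) !addrA.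
by rewrite [LHS](ACl (1*3*5*2*4*6*7)).
Qed.

Lemma BmulC : commutative Bmul.
Proof.
move=> [a k] [b l]; rewrite /Bmul /sd_mul /=; congr pair; last by rewrite mulrC.
by rewrite mC addrAC.
Qed.

Lemma Bmul1 : left_id Bone Bmul.
Proof.
move=> [a k]; rewrite /Bmul /Bone /sd_mul /sd_one /=.
by rewrite m0l scaler0 scale1r !add0r mul1r.
Qed.

Lemma BmulDl : left_distributive Bmul +%R.
Proof.
move=> [a k] [b l] [c m]; rewrite /Bmul /sd_mul /=; congr pair; last by rewrite mulrDl.
rewrite /= mDl scalerDr scalerDl !addrA.
by rewrite [LHS](ACl (1*3*5*2*4*6)).
Qed.

Lemma Bone_neq0 : Bone != 0.
Proof. by apply/negP => /eqP [] /eqP; rewrite oner_eq0. Qed.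

HB.instance Definition _ := GRing.Zmodule_isComNzRing.Build B BmulA BmulC Bmul1 BmulDl Bone_neq0.

Lemma BmulE (x y : B) : x * y = sd_mul mul x y. Proof. by []. Qed.
Definition iota (c : K) : B := (0, c).
Lemma iota_zmod : zmod_morphism iota.
Proof. by move=> x y; rewrite /iota; congr pair; rewrite subrr. Qed.
HB.instance Definition _ := GRing.isZmodMorphism.Build K B iota iota_zmod.
Lemma iota_monoid : monoid_morphism iota.
Proof.
split => // x y; rewrite /iota BmulE /sd_mul /=.
by rewrite m0l !scaler0 !addr0.
Qed.
HB.instance Definition _ := GRing.isMonoidMorphism.Build K B iota iota_monoid.

Lemma iota_mul c (x : B) : iota c * x = (c *: x.1, c * x.2).
Proof.
case: x => a k; rewrite /iota BmulE /sd_mul /=.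
by rewrite m0l scaler0 !add0r.
Qed.

Fixpoint polyn (n : nat) : comNzRingType :=
  if n is m.+1 then ({poly polyn m} : comNzRingType) else K.

Variable gs : seq (A * K).
Definition gen i : B := nth 0 gs i.

Fixpoint evn (m : nat) : {rmorphism polyn m -> B} :=
  match m return {rmorphism polyn m -> B} with
  | 0 => (iota : {rmorphism K -> B})
  | m'.+1 => (horner_morph (fun x => mulrC (gen m') (evn m' x)) : {rmorphism {poly polyn m'} -> B})
  end.

Definition range m (b : B) := exists p : polyn m, evn m p = b.

Lemma range_S m b : range m b -> range m.+1 b.
Proof. by case=> p <-; exists (p%:P : {poly polyn m}); rewrite /= horner_morphC. Qed.

Lemma range_le m m' b : (m <= m')%N -> range m b -> range m' b.
Proof.
elim: m' => [|m' IH]; first by rewrite leqn0 => /eqP ->.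
rewrite leq_eqVlt => /orP [/eqP -> //|h] /(IH h); exact: range_S.
Qed.

Lemma range_gen i : range i.+1 (gen i).
Proof. by exists ('X : {poly polyn i}); rewrite /= horner_morphX. Qed.


Lemma range_all :
  (forall x : A * K, forall S : A * K -> Prop,
      S (@sd_one K A) ->
      (forall g, g \in gs -> S g) ->
      (forall y z, S y -> S z -> S (sd_add y z)) ->
      (forall r y, S y -> S (sd_scale r y)) ->
      (forall y z, S y -> S z -> S (sd_mul mul y z)) ->
      S x) -> forall x : B, range (size gs) x.
Proof.
move=> hfg x; apply: (hfg x (range (size gs))).
- by exists 1; rewrite rmorph1.
- move=> g gin; rewrite -(nth_index 0 gin).
  apply: (range_le (m := (index g gs).+1)); first by rewrite index_mem.
  exact: range_gen.
- by move=> y z [p <-] [q <-]; exists (p + q); rewrite rmorphD.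
- move=> r y [p <-].
  have [q hq] : range (size gs) (iota r) by apply: (range_le (m := 0)) => //; exists r.
  by exists (q * p); rewrite rmorphM hq iota_mul; case: (evn _ p).
- by move=> y z [p <-] [q <-]; exists (p * q); rewrite rmorphM.
Qed.

Lemma noeth_polyn m : noetherian K -> noetherian (polyn m).
Proof. by move=> nK; elim: m => [|m IH] //=; apply: hilbert. Qed.

Lemma torsion_nz s : noetherian K ->
  (forall x : A * K, forall S : A * K -> Prop,
      S (@sd_one K A) ->
      (forall g, g \in gs -> S g) ->
      (forall y z, S y -> S z -> S (sd_add y z)) ->
      (forall r y, S y -> S (sd_scale r y)) ->
      (forall y z, S y -> S z -> S (sd_mul mul y z)) ->
      S x) ->
  exists c, forall n (a : A), s ^+ n *: a = 0 -> s ^+ c *: a = 0.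
Proof.
move=> nK hfg; set m := size gs.
pose C n (p : polyn m) := iota (s ^+ n) * evn m p = 0.
have [N hN] : exists N, forall n p, (N <= n)%N -> C n p -> C N p.
  apply: (@noeth_polyn m nK C).
  - move=> n; split.
    + by rewrite /C rmorph0 mulr0.
    + by move=> x y; rewrite /C rmorphD mulrDr => -> ->; rewrite addr0.
    + by move=> r x; rewrite /C rmorphM mulrCA => ->; rewrite mulr0.
  - by move=> n x; rewrite /C exprS rmorphM -mulrA => ->; rewrite mulr0.
exists N => n a h.
have [p hp] := range_all hfg (a, 0).
case: (leqP N n) => hn.
  have hC : C n p by rewrite /C hp iota_mul /= h mulr0.
  by move: (hN n p hn hC); rewrite /C hp iota_mul /= => [[]].
by rewrite -(subnK (ltnW hn)) exprD -scalerA h scaler0.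
Qed.
End Unit.

Section Alias.
Variables (K : comPzRingType) (A : lmodType K).
Hypothesis H1 : (1 : K) != 0.
Definition K' : Type := K.
HB.instance Definition _ := GRing.ComPzRing.on K'.
HB.instance Definition _ := GRing.PzSemiRing_isNonZero.Build K' H1.
Definition A' : Type := A.
HB.instance Definition _ := GRing.Zmodule.on A'.
Definition scale' (k : K') (a : A') : A' := (k : K) *: (a : A).
Lemma scale'A a b v : scale' a (scale' b v) = scale' (a * b) v.
Proof. exact: scalerA. Qed.
Lemma scale'1 : left_id 1 scale'. Proof. exact: scale1r. Qed.
Lemma scale'Dr : right_distributive scale' +%R. Proof. exact: scalerDr. Qed.
Lemma scale'Dl v : {morph scale'^~ v: a b / a + b}. Proof. exact: scalerDl. Qed.
HB.instance Definition _ := GRing.Zmodule_isLmodule.Build K' A' scale'A scale'1 scale'Dr scale'Dl.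

Lemma torsion_alias (mul : A -> A -> A) s : noetherian K -> nucomalg mul -> fg_unitization mul ->
  exists c, forall n (a : A), s ^+ n *: a = 0 -> s ^+ c *: a = 0.
Proof.
move=> nK hm [gs hfg].
have := @torsion_nz K' A' mul hm gs s nK hfg.
by [].
Qed.
End Alias.

Lemma torsion (K : comPzRingType) (A : lmodType K) (mul : A -> A -> A) s :
  noetherian K -> nucomalg mul -> fg_unitization mul ->
  exists c, forall n (a : A), s ^+ n *: a = 0 -> s ^+ c *: a = 0.
Proof.
have [/eqP h1|h1] := boolP ((1 : K) == 0); last exact: torsion_alias.
move=> _ _ _; exists 0%N => n a _.
by rewrite expr0 -[a]scale1r h1 !scale0r.
Qed.
Definition zrel (Z : proset) (T : Type) (f g : {i : pidx Z & @pobj Z i -> T}) : Prop :=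
  exists (k : pidx Z) (u : chom (projT1 f) k) (v : chom (projT1 g) k),
    forall x, projT2 f (Defs.pmap u x) = projT2 g (Defs.pmap v x).

Lemma zrel_sym Z T (f g : {i : pidx Z & @pobj Z i -> T}) : zrel f g -> zrel g f.
Proof. by case=> k [u [v h]]; exists k, v, u => x; rewrite h. Qed.

Lemma zrel_trans Z T (f g h : {i : pidx Z & @pobj Z i -> T}) :
  zrel f g -> zrel g h -> zrel f h.
Proof.
case=> k1 [u1 [v1 h1]] [k2 [u2 [v2 h2]]].
case: (pidx_filtered Z) => _ hub heq.
have [k3 [[w1] [w2]]] := hub k1 k2.
have [k4 [w e]] := heq _ _ (ccomp w1 v1) (ccomp w2 u2).
exists k4, (ccomp w (ccomp w1 u1)), (ccomp w (ccomp w2 v2)) => x.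
rewrite !pmap_comp h1.
have -> : Defs.pmap v1 (Defs.pmap w1 (Defs.pmap w x)) = Defs.pmap (ccomp w (ccomp w1 v1)) x by rewrite !pmap_comp.
by rewrite e !pmap_comp h2.
Qed.

Lemma zrel_post Z T T' (h : T -> T') (f g : {i : pidx Z & @pobj Z i -> T}) :
  zrel f g ->
  zrel (existT (fun i => @pobj Z i -> T') (projT1 f) (fun x => h (projT2 f x)))
       (existT (fun i => @pobj Z i -> T') (projT1 g) (fun x => h (projT2 g x))).
Proof. by case=> k [u [v e]]; exists k, u, v => x /=; rewrite e. Qed.

Lemma zrel_inv Z T T' T'' (phi : T -> T') (psi : T -> T'') i1 i2
  (F1 : @pobj Z i1 -> T) (F2 : @pobj Z i2 -> T) :
  (forall x y, phi x = phi y -> psi x = psi y) ->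
  zrel (existT (fun i => @pobj Z i -> T') i1 (fun x => phi (F1 x)))
       (existT (fun i => @pobj Z i -> T') i2 (fun x => phi (F2 x))) ->
  zrel (existT (fun i => @pobj Z i -> T'') i1 (fun x => psi (F1 x)))
       (existT (fun i => @pobj Z i -> T'') i2 (fun x => psi (F2 x))).
Proof. by move=> hp [k [u [v e]]]; exists k, u, v => x /=; apply: hp; apply: e. Qed.

Section Pro.
Variables (K : comPzRingType) (A : lmodType K) (s : K) (c : nat).
Hypothesis tor : forall n (a : A), s ^+ n *: a = 0 -> s ^+ c *: a = 0.

Lemma canc j (b b' : A) : s ^+ (j + c) *: b = s ^+ (j + c) *: b' -> s ^+ c *: b = s ^+ c *: b'.
Proof.
move=> e; apply/eqP; rewrite -subr_eq0 -scalerBr; apply/eqP; apply: (tor (n := (j + c)%N)).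
by rewrite scalerBr e subrr.
Qed.

Definition wit n (x : @sA K A s n) : A :=
  proj1_sig (constructive_indefinite_description _ (proj2_sig x)).
Lemma witP n (x : @sA K A s n) : proj1_sig x = s ^+ n *: wit x.
Proof. exact: (proj2_sig (constructive_indefinite_description _ (proj2_sig x))). Qed.

Lemma sA_eq n (x y : @sA K A s n) : proj1_sig x = proj1_sig y -> x = y.
Proof.
case: x => a p; case: y => b q /= e; subst b; congr exist; exact: proof_irrelevance.
Qed.

Definition ginv : prorawhom (@ideal_proset K A s) (@coloc_proset K A s) :=
  fun j : natcat => existT (fun i : natcat => @sA K A s i -> A) (j + c)%N
                           (fun x => s ^+ c *: wit x).

Lemma iso_part : pro_iso (@coloc_to_ideal K A s).
Proof.
split.
  move=> j j' v; exists j', (cid j'), v => x /=; apply: sA_eq => /=.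
  have hv : (j <= j')%N := v.
  by rewrite /coloc_map subnn expr0 scale1r scalerA -exprD subnKC.
exists ginv; split.
- move=> j j' v.
  have hv : (j <= j')%N := v.
  have v' : chom ((j + c)%N : natcat) ((j' + c)%N : natcat) by rewrite /= leq_add2r.
  exists (j' + c)%N, (cid _), v' => x /=.
  rewrite /coloc_map scalerA (mulrC _ (s ^+ c)) -scalerA.
  apply/esym/(canc (j := j)); rewrite -witP /= scalerA -exprD.
  have -> : (j + c + (j' - j) = j' + c)%N by lia.
  by rewrite -witP.
- move=> j; exists (j + c)%N, (cid _), (leq_addr c j : chom (j : natcat) ((j + c)%N : natcat)) => x /=.
  rewrite /coloc_map subnn expr0 scale1r.
  have -> : (j + c - j = c)%N by lia.
  by apply: (canc (j := j)); rewrite -witP.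
- move=> j; exists (j + c)%N, (cid _), (leq_addr c j : chom (j : natcat) ((j + c)%N : natcat)) => x /=.
  by apply: sA_eq => /=; rewrite scalerA -exprD -witP.
Qed.

Lemma locinj j (x y : @sA K A s (j + c)%N) (v : chom (j : natcat) ((j + c)%N : natcat)) :
  to_loc s (proj1_sig x) = to_loc s (proj1_sig y) -> sA_incl v x = sA_incl v y.
Proof.
move=> e; apply: sA_eq => /=.
have e1 := f_equal (fun P => proj1_sig P (proj1_sig x, 0%N)) e.
have : locrel s (proj1_sig x, 0%N) (proj1_sig x, 0%N) by exists 0%N; rewrite /= subrr scaler0.
rewrite /= in e1; rewrite e1 => -[k /=]; rewrite !expr0 !scale1r !witP -scalerBr scalerA -exprD.
move/tor; rewrite scalerBr => /eqP; rewrite subr_eq0 => /eqP ec.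
by rewrite exprD -!scalerA ec.
Qed.

Lemma mono_part : pro_mono (@ideal_to_loc K A s).
Proof.
split.
  by move=> j j' v; exists 0%N, (cid (0%N : natcat)), (cid (0%N : natcat)) => x.
move=> Z g1 g2 hg1 hg2 heq j.
pose J := (j + c)%N.
have vjJ : chom (j : natcat) (J : natcat) by exact: leq_addr.
have v0J : chom (0%N : natcat) (J : natcat) by [].
have E1 := hg1 j J vjJ; have E3 := hg2 j J vjJ.
have E2 := zrel_post (fun x => to_loc s (proj1_sig x)) (hg1 0%N J v0J).
have E4 := zrel_post (fun x => to_loc s (proj1_sig x)) (hg2 0%N J v0J).
have H := heq tt.
have M : zrel (existT (fun i => @pobj Z i -> @loc K A s) (projT1 (g1 J))
                 (fun x => to_loc s (proj1_sig (projT2 (g1 J) x))))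
              (existT (fun i => @pobj Z i -> @loc K A s) (projT1 (g2 J))
                 (fun x => to_loc s (proj1_sig (projT2 (g2 J) x))))
  := zrel_trans E2 (zrel_trans H (zrel_sym E4)).
have M' := zrel_inv (phi := fun y : @sA K A s J => to_loc s (proj1_sig y))
   (psi := sA_incl vjJ) (fun x y => @locinj j x y vjJ) M.
exact: zrel_trans (zrel_sym E1) (zrel_trans M' E3).
Qed.
End Pro.

Unset Implicit Arguments.
Local Close Scope ring_scope.

Theorem lemma4 (K : comPzRingType) (A : lmodType K) (mul : A -> A -> A) (s : K) :
  noetherian K ->
  nucomalg mul ->
  fg_unitization mul ->
  pro_iso (@coloc_to_ideal K A s) /\ pro_mono (@ideal_to_loc K A s).
Proof.
move=> nK hm hfg.
have [c tor] := torsion s nK hm hfg.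
split; [exact: iso_part tor | exact: mono_part tor].
Qed.
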